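(* Let $P$ be a matrix as in the context, with column index set $\mathcal{F}$. Let $A\subseteq\mathcal{F}$ with $|A|=r+1$, $\det(P_A)\neq0$ and $A\cap\mathcal{F}'\neq\emptyset$. Then there exists $i_1\in\{0,\dots,r\}$ such that $|A\cap\mathcal{F}_{i_1}|=0$ and $|A\cap\mathcal{F}_i|=1$ for all $i\neq i_1$, and $|\det(P_A)|=\prod_{i\neq i_1}l_{ij_i}$, where $A\cap\mathcal{F}_i=\{f_{ij_i}\}$ for $i\ne i_1$.
   Context: Fix integers $r\ge1$, $n_0,\dots,n_r\ge1$, vectors $l_i\in\mathbb{Z}_{\ge1}^{n_i}$, $d_i\in\mathbb{Z}^{n_i}$ with $\gcd(l_{ij},d_{ij})=1$ and $d_{i1}/l_{i1}>\dots>d_{in_i}/l_{in_i}$. Let $e_1,\dots,e_{r+1}$ be the standard basis of $\mathbb{Z}^{r+1}$, $u=e_{r+1}$, $e_0=-(e_1+\dots+e_r)$, $v_{ij}=l_{ij}e_i+d_{ij}u$. Let $\mathcal{F}_i=\{f_{i1},\dots,f_{in_i}\}$, $\mathcal{F}'$ one of $\emptyset,\{f^+\},\{f^-\},\{f^+,f^-\}$ (types (ee),(pe),(ep),(pp)), $\mathcal{F}=\mathcal{F}_0\cup\dots\cup\mathcal{F}_r\cup\mathcal{F}'$, and $P$ the $(r+1)\times|\mathcal{F}|$ matrix with column $v_{ij}$ at $f_{ij}$, $u$ at $f^+$, $-u$ at $f^-$. For $|A|=r+1$, $P_A$ is the square submatrix of columns indexed by $A$. *)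

(* Defs.v *)
From HB Require Import structures.
From mathcomp Require Import all_boot all_order all_algebra.
Set Implicit Arguments. Unset Strict Implicit. Unset Printing Implicit Defensive.
Import Order.TTheory GRing.Theory Num.Theory.
Local Open Scope ring_scope.

(* Column labels: inl (Tagged i j) = f_{ij}  (j : 'I_(n i), 0-based: j stands for f_{i,j+1});
   inr true = f^+, inr false = f^-.
   Coordinates of Z^{r+1}: coordinate k (0-based) is e_{k+1}; so e_i (1<=i<=r) is
   coordinate i-1 and u = e_{r+1} is coordinate r. *)

Definition colT (r : nat) (n : 'I_r.+1 -> nat) : finType :=
  ({i : 'I_r.+1 & 'I_(n i)} + bool)%type.

Definition fij (r : nat) (n : 'I_r.+1 -> nat) (i : 'I_r.+1) (j : 'I_(n i))
  : colT n := inl (Tagged (fun i => 'I_(n i)) j).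

(* the full column index set F = F_0 u ... u F_r u F', where F' is encoded by a
   subset Fp of bool (true = f^+, false = f^-); the four types (ee),(pe),(ep),(pp)
   correspond to the four subsets of bool *)
Definition Fset (r : nat) (n : 'I_r.+1 -> nat) (Fp : {set bool}) : {set colT n} :=
  [set x : colT n | if x is inr b then b \in Fp else true].

Definition Fi (r : nat) (n : 'I_r.+1 -> nat) (i : 'I_r.+1) : {set colT n} :=
  [set x : colT n | if x is inl s then tag s == i else false].

Definition Pent (r : nat) (n : 'I_r.+1 -> nat)
  (l d : forall i : 'I_r.+1, 'I_(n i) -> int) (k : 'I_r.+1) (x : colT n) : int :=
  match x with
  | inl s =>
      let i := tag s in let j := tagged s in
      if (k == r :> nat) then d i j
      else if (i == 0 :> nat) then - l i j
      else if (k.+1 == i :> nat) then l i j else 0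
  | inr true => if (k == r :> nat) then 1 else 0
  | inr false => if (k == r :> nat) then -1 else 0
  end.

(* P_A : the square submatrix of the columns indexed by A (in the enumeration
   order of A; meaningful when #|A| = r+1) *)
Definition PA (r : nat) (n : 'I_r.+1 -> nat)
  (l d : forall i : 'I_r.+1, 'I_(n i) -> int) (A : {set colT n}) : 'M[int]_(r.+1) :=
  \matrix_(k < r.+1, c < r.+1) Pent l d k (nth (inr true) (enum A) c).

(* Main.v *)
Require Import Defs.
From HB Require Import structures.
From mathcomp Require Import all_boot all_order all_algebra.
From mathcomp Require Import zify.
Set Implicit Arguments. Unset Strict Implicit. Unset Printing Implicit Defensive.
Import Order.TTheory GRing.Theory Num.Theory.
Local Open Scope ring_scope.

Definition Wf (m : nat) (k : 'I_m) (i : 'I_m.+1) : int :=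
  if (i == 0 :> nat) then -1 else if (k.+1 == i :> nat) then 1 else 0.

Lemma prod1 (a b : int) : 0 <= a -> 0 <= b -> a * b = 1 -> b = 1.
Proof. move=> ha hb h.
have an : a != 0 by apply/eqP=> e; move: h; rewrite e mul0r.
have bn : b != 0 by apply/eqP=> e; move: h; rewrite e mulr0.
nia. Qed.

Lemma detW m (t : 'I_m -> 'I_m.+1) (i1 : 'I_m.+1) : injective t ->
  (forall c, t c != i1) -> `|\det (\matrix_(k < m, c < m) Wf k (t c))| = 1.
Proof.
case: m t i1 => [|m] t i1 tinj hti; first by rewrite det_mx00 normr1.
have Hti c : (t c : nat) <> i1 by move=> E; move: (hti c); rewrite (_ : t c = i1) ?eqxx //; exact: val_inj.
have Htinj c c' : (t c : nat) = t c' -> c = c' by move/val_inj/tinj.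
set p : 'I_m.+1 := inord i1.-1.
have pE : (p : nat) = i1.-1 by rewrite inordK //; have := ltn_ord i1; lia.
set s := fun c => (inord (if (t c : nat) == 0%N then i1.-1 else (t c).-1) : 'I_m.+1).
have sE c : (s c : nat) = if (t c : nat) == 0%N then i1.-1 else (t c).-1.
  rewrite inordK //; have := ltn_ord (t c); have := ltn_ord i1; case: ifP => _; lia.
have sinj : injective s.
  move=> c c' /(congr1 (@nat_of_ord _)); rewrite !sE => e; apply: Htinj.
  have := Hti c; have := Hti c'; have := ltn_ord i1; move: e.
  case: (posnP (t c)) => h1; case: (posnP (t c')) => h2; lia.
set eps := \row_c (if (t c : nat) == 0%N then -1 else 1 : int).
set S : 'M[int]_m.+1 := \matrix_(k, k') ((k == k')%:R - ((k.+1 != i1) && (k'.+1 == i1))%:R).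
set W := \matrix_(k < m.+1, c < m.+1) Wf k (t c).
have key : S *m W = (perm_mx (perm.perm sinj))^T *m diag_mx eps.
  apply/matrixP => k c; rewrite mul_mx_diag !mxE perm.permE.
  under eq_bigr do rewrite !mxE mulrBl.
  rewrite sumrB (bigD1 k) //= eqxx mul1r big1 ?addr0; last first.
    by move=> k' /negbTE; rewrite eq_sym => ->; rewrite mul0r.
  have -> : \sum_(k' < m.+1) ((k.+1 != i1) && (k'.+1 == i1))%:R * Wf k' (t c)
      = ((k.+1 != i1) && (i1 != 0%N :> nat))%:R * Wf p (t c).
    case: (posnP i1) => hi.
      rewrite andbF mul0r big1 // => k' _; rewrite hi andbF mul0r //.
    rewrite andbT (bigD1 p) //= pE big1 ?addr0.
      by rewrite (_ : (i1.-1.+1 == i1) = true) ?andbT //; apply/eqP; lia.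
    move=> k' kp; rewrite (_ : (k'.+1 == i1) = false) ?andbF ?mul0r //.
    apply/eqP => e; move: kp; rewrite -(inj_eq (@ord_inj _)) pE; apply/negP; rewrite negbK; apply/eqP; lia.
  rewrite -val_eqE /= sE /Wf pE.
  have := Hti c; have := ltn_ord i1; have := ltn_ord k; have := ltn_ord (t c).
  case: (posnP (t c)) => ht; case: (posnP i1) => hi;
  case: (eqVneq (k.+1 : nat) i1) => hk; case: (eqVneq (k.+1 : nat) (t c)) => hk2;
  case: (eqVneq (i1.-1.+1) (t c : nat)) => h3; case: (eqVneq ((t c).-1) (k:nat)) => h4;
  case: (eqVneq (i1.-1) (k:nat)) => h5; rewrite /=; try lia; try by [].
have := congr1 (fun M => `|\det M|) key; rewrite /= !det_mulmx det_tr det_perm det_diag.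
rewrite !normrM normr_sign mul1r normr_prod big1 => [h|c _]; last first.
  by rewrite mxE; case: ifP.
by apply: prod1 h.
Qed.

Definition coefx (r : nat) (n : 'I_r.+1 -> nat)
  (l : forall i : 'I_r.+1, 'I_(n i) -> int) (x : colT n) : int :=
  if x is inl s then l (tag s) (tagged s) else 0.
Definition tgx (r : nat) (n : 'I_r.+1 -> nat) (x : colT n) : 'I_r.+1 :=
  if x is inl s then tag s else ord0.

Lemma Pent_lift (r : nat) (n : 'I_r.+1 -> nat)
  (l d : forall i : 'I_r.+1, 'I_(n i) -> int) (k : 'I_r) (x : colT n) :
  Pent l d (lift ord_max k) x = coefx l x * Wf k (tgx x).
Proof.
have kr : (k == r :> nat) = false by apply/negbTE; rewrite neq_ltn ltn_ord.
case: x => [[i j]|[]]; rewrite /Pent lift_max /= kr ?mul0r //.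
rewrite /Wf; case: ifP => _; first by rewrite mulrN1.
by case: ifP => _; rewrite ?mulr1 ?mulr0.
Qed.

Lemma Fi_uniq (r : nat) (n : 'I_r.+1 -> nat) (a : colT n) i i' :
  a \in Fi n i -> a \in Fi n i' -> i = i'.
Proof. by case: a => [s|bb]; rewrite !inE // => /eqP <- /eqP. Qed.

Lemma exFij (r : nat) (n : 'I_r.+1 -> nat) (a : colT n) i :
  a \in Fi n i -> exists jj : 'I_(n i), a = fij jj.
Proof. case: a => [[i' jj]|bb]; rewrite inE //= => /eqP e; subst i'; by exists jj. Qed.

Lemma fijF (r : nat) (n : 'I_r.+1 -> nat) i (jj : 'I_(n i)) : fij jj \in Fi n i.
Proof. by rewrite inE /=. Qed.

Lemma inrF (r : nat) (n : 'I_r.+1 -> nat) i b : (inr b : colT n) \notin Fi n i.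
Proof. by rewrite inE. Qed.


Theorem lemma4p8 (r : nat) (n : 'I_r.+1 -> nat)
  (l d : forall i : 'I_r.+1, 'I_(n i) -> int) (Fp : {set bool})
  (hr : (1 <= r)%N)
  (hn : forall i, (0 < n i)%N)
  (hl : forall i j, 0 < l i j)
  (hcop : forall i j, gcdz (l i j) (d i j) = 1)
  (hslope : forall i (j j' : 'I_(n i)), (j < j')%N ->
     (d i j)%:~R / (l i j)%:~R > (d i j')%:~R / (l i j')%:~R :> rat)
  (A : {set colT n})
  (hAF : A \subset Fset n Fp)
  (hcard : #|A| = r.+1)
  (hdet : \det (PA l d A) != 0)
  (hAFp : [exists b : bool, inr b \in A]) :
  exists i1 : 'I_r.+1,
    #|A :&: Fi n i1| = 0%N /\
    exists j : forall i : 'I_r.+1, 'I_(n i),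
      (forall i, i != i1 -> #|A :&: Fi n i| = 1%N /\ A :&: Fi n i = [set fij (j i)]) /\
      `|\det (PA l d A)| = \prod_(i < r.+1 | i != i1) l i (j i).

Proof.
pose x := fun c : 'I_r.+1 => nth (inr true) (enum A) c.
have sz : size (enum A) = r.+1 by rewrite -cardE hcard.
have xA c : x c \in A by rewrite -mem_enum mem_nth // sz.
have xinj : injective x.
  by move=> c c' /eqP; rewrite nth_uniq ?sz ?enum_uniq // => /eqP/val_inj.
have Ax a : a \in A -> exists c, a = x c.
  move=> aA; have ia : (index a (enum A) < r.+1)%N by rewrite -sz index_mem mem_enum.
  by exists (Ordinal ia); rewrite /x /= nth_index ?mem_enum.
case/existsP: hAFp => b bA.
case: (Ax _ bA) => c0 xc0.
pose y := fun c : 'I_r => x (lift c0 c).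
have Ay a : a \in A -> a != inr b -> exists c, a = y c.
  move=> aA; case: (Ax _ aA) => c ->; case: (unliftP c0 c) => [c' ->|->].
    by exists c'.
  by rewrite -xc0 eqxx.
set M := PA l d A.
have Mc0 k : M k c0 = if (k == r :> nat) then (if b then 1 else -1) else 0.
  by rewrite /M /PA mxE -/(x c0) -xc0; case: (b).
have detM : \det M = M ord_max c0 * cofactor M ord_max c0.
  rewrite (expand_det_col _ c0) (bigD1 ord_max) //= big1 ?addr0 // => k kne.
  rewrite Mc0 ifF ?mul0r //; apply/negbTE; move: kne; apply: contra => /eqP e.
  by apply/eqP/val_inj.
pose W := \matrix_(k < r, c < r) Wf k (tgx (y c)).
pose D := \row_(c < r) coefx l (y c).
have M'E : row' ord_max (col' c0 M) = W *m diag_mx D.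
  by apply/matrixP => k c; rewrite mul_mx_diag !mxE Pent_lift mulrC.
have absM : `|\det M| = `|\det W| * \prod_c `|coefx l (y c)|.
  rewrite detM /cofactor M'E det_mulmx det_diag !normrM normr_sign Mc0 /= eqxx.
  rewrite (_ : `|if b then 1 else -1| = 1 :> int); last by case: (b).
  rewrite !mul1r normr_prod; congr (_ * _); apply: eq_bigr => c _; rewrite mxE //.
have hM : `|\det M| != 0 by rewrite normr_eq0.
have hW : `|\det W| != 0.
  by apply: contraNneq hM; rewrite absM => ->; rewrite mul0r.
have yinl c : coefx l (y c) != 0.
  apply/eqP => h; move: hM; rewrite absM (bigD1 c) //= h normr0 mul0r mulr0 eqxx //.
pose t := fun c => tgx (y c).
have tinj : injective t.
  move=> c c' e; apply/eqP; apply: contraNT hW => ne.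
  rewrite -det_tr (determinant_alternate ne) ?normr0 // => k.
  by rewrite !mxE; move: e; rewrite /t => ->.
pose T := [set t c | c in [set: 'I_r]].
have cT : #|T| = r by rewrite card_imset // cardsT card_ord.
have : #|~: T| == 1%N.
  by have := cardsC T; rewrite cT card_ord => h; apply/eqP; lia.
case/cards1P => i1 Ti1.
have inT i : (i \in T) = (i != i1).
  by rewrite -[i \in T]negbK -in_setC Ti1 in_set1.
have tne c : t c != i1 by rewrite -inT imset_f ?inE.
have hWabs : `|\det W| = 1 := detW tinj tne.
have yF c : y c \in Fi n (t c).
  by move: (yinl c); rewrite /t; case: (y c) => [s|bb] //= _; rewrite inE.
have yA c : y c \in A := xA _.
have AFi i c : i = t c -> A :&: Fi n i = [set y c].
  move=> ->; apply/setP => a; rewrite in_setI in_set1.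
  apply/andP/eqP => [[aA aF]|->]; last by rewrite yA yF.
  have ab : a != inr b by apply: contraTneq aF => ->; rewrite inrF.
  case: (Ay _ aA ab) => c' e; subst a.
  by congr y; apply: tinj; apply: (Fi_uniq (yF c') aF).
have AFi1 : A :&: Fi n i1 = set0.
  apply/setP => a; rewrite in_setI in_set0; apply/negP => /andP[aA aF].
  have ab : a != inr b by apply: contraTneq aF => ->; rewrite inrF.
  case: (Ay _ aA ab) => c' e; subst a.
  by move: (tne c'); rewrite (Fi_uniq (yF c') aF) eqxx.
exists i1; split; first by rewrite AFi1 cards0.
pose j := fun i => odflt (Ordinal (hn i)) [pick jj : 'I_(n i) | fij jj \in A].
have jE i c : i = t c -> fij (j i) = y c.
  move=> e; have := yF c; rewrite -e => /exFij [jj hjj].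
  rewrite /j; case: pickP => [jj' hA | /(_ jj)]; last by rewrite -hjj yA.
  have : fij jj' \in A :&: Fi n i by rewrite in_setI hA fijF.
  by rewrite (AFi i c e) in_set1 => /eqP.
exists j; split.
  move=> i ne; have : i \in T by rewrite inT.
  case/imsetP => c _ e; rewrite (AFi i c e) cards1; split => //.
  by rewrite (jE i c e).
rewrite absM hWabs mul1r.
rewrite (eq_bigl (fun i => i \in T)); last by move=> i; rewrite inT.
rewrite big_imset /=; last by move=> ? ? _ _; apply: tinj.
apply: eq_big => [c|c _]; first by rewrite inE.
rewrite -(jE (t c) c erefl) /= gtr0_norm //.
Qed.
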